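(* For every integer $n\ge0$, $$\sum_{i=0}^n-{n\brace i}(-2)^{-2i}=(-2)^{-2n-1}.$$
   Context: The Euler polynomials $E_n(x)$ are defined by $\frac{2e^{xt}}{e^t+1}=\sum_{n\ge0}E_n(x)\frac{t^n}{n!}$. For $N\ge0$, the numbers ${N\brace j}$ ($0\le j\le N$) are defined by $\sum_{j=0}^N{N\brace j}x^{2j}=x^{2N+1}-E_{2N+1}(x)$. *)

(* Defs.v *)
From mathcomp Require Import all_boot all_order all_algebra.
Set Implicit Arguments. Unset Strict Implicit. Unset Printing Implicit Defensive.
Import Order.TTheory GRing.Theory Num.Theory.
Local Open Scope ring_scope.

(* The generating function
   2 e^{xt}/(e^t+1) = sum_n E_n(x) t^n/n!  is equivalent (multiply by e^t+1
   and compare coefficients of t^n/n!) to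
     sum_{k<=n} C(n,k) E_k(x) + E_n(x) = 2 x^n,
   i.e.  E_n(x) = x^n - 1/2 * sum_{k<n} C(n,k) E_k(x).
   euler_seq n = [:: E_0; ...; E_n]. *)
Fixpoint euler_seq (n : nat) : seq {poly rat} :=
  match n with
  | 0 => [:: 1]
  | n'.+1 =>
      let s := euler_seq n' in
      rcons s ('X^n - 2^-1 *: \sum_(k < n) ('C(n, k))%:R *: s`_k)
  end.

Definition euler_poly (n : nat) : {poly rat} := (euler_seq n)`_n.

Definition ebrace (N j : nat) : rat :=
  ('X^(2 * N + 1) - euler_poly (2 * N + 1))`_(2 * j).

(* Main.v *)
Require Import Defs.
From mathcomp Require Import all_boot all_order all_algebra.
From mathcomp Require Import ring lra.
Import Order.TTheory GRing.Theory Num.Theory.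
Local Open Scope ring_scope.

Lemma size_euler_seq n : size (euler_seq n) = n.+1.
Proof. by elim: n => //= n IH; rewrite size_rcons IH. Qed.

Lemma euler_seq_nth n k : (k <= n)%N -> (euler_seq n)`_k = euler_poly k.
Proof.
elim: n => [|n IH]; first by rewrite leqn0 => /eqP->.
rewrite leq_eqVlt => /orP[/eqP->|]; first by [].
rewrite ltnS => kn /=; rewrite nth_rcons size_euler_seq ltnS kn; exact: IH.
Qed.

Lemma euler_poly_rec m : (0 < m)%N ->
  euler_poly m = 'X^m - 2^-1 *: \sum_(k < m) ('C(m, k))%:R *: euler_poly k.
Proof.
case: m => // m _; rewrite /euler_poly /= nth_rcons size_euler_seq ltnn eqxx.
congr (_ - _ *: _); apply: eq_bigr => k _; rewrite euler_seq_nth //.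
by rewrite -ltnS.
Qed.

Lemma euler_poly0 : euler_poly 0 = 1. Proof. by []. Qed.

Lemma size_euler m : (size (euler_poly m) <= m.+1)%N.
Proof.
elim/ltn_ind: m => m IH.
case: m IH => [|m] IH; first by rewrite euler_poly0 size_poly1.
rewrite euler_poly_rec //.
apply: leq_trans (size_polyD _ _) _; rewrite geq_max size_polyXn leqnn /=.
rewrite size_polyN; apply: leq_trans (size_scale_leq _ _) _.
apply: (big_ind (fun p : {poly rat} => size p <= m.+2)%N).
- by rewrite size_poly0.
- by move=> p q Hp Hq; apply: leq_trans (size_polyD _ _) _; rewrite geq_max Hp Hq.
move=> k _; apply: leq_trans (size_scale_leq _ _) _.
apply: leq_trans (IH k (ltn_ord k)) _; by rewrite ltnS ltnW.
Qed.

Lemma euler_shift m (x : rat) :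
  (euler_poly m).[x + 1] + (euler_poly m).[x] = 2 * x ^+ m.
Proof.
elim/ltn_ind: m => m IH.
case: m IH => [|m] IH; first by rewrite euler_poly0 !hornerC expr0 mulr1.
rewrite euler_poly_rec // !hornerD !hornerN !hornerZ !horner_sum !hornerXn.
have H : \sum_(k < m.+1) ('C(m.+1, k))%:R * (euler_poly k).[x + 1]
  + \sum_(k < m.+1) ('C(m.+1, k))%:R * (euler_poly k).[x]
  = 2 * ((x + 1) ^+ m.+1 - x ^+ m.+1).
  rewrite -big_split /=.
  rewrite (eq_bigr (fun k : 'I_m.+1 => 2 * (x ^+ k * ('C(m.+1, k))%:R))); last first.
    move=> k _; rewrite -mulrDr IH //; ring.
  rewrite -mulr_sumr; congr (_ * _).
  rewrite exprD1n [X in _ = X - _]big_ord_recr /= binn mulr1n addrK.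
  by apply: eq_bigr => k _; rewrite mulr_natr.
have hz : forall y, \sum_(i < m.+1) (('C(m.+1, i))%:R *: euler_poly i).[y]
  = \sum_(i < m.+1) ('C(m.+1, i))%:R * (euler_poly i).[y].
  by move=> y; apply: eq_bigr => i _; rewrite hornerZ.
rewrite !hz.
move: H; set A := \sum_(i < m.+1) _; set B := \sum_(i < m.+1) _ => H.
have -> : A = 2 * ((x + 1) ^+ m.+1 - x ^+ m.+1) - B by rewrite -H addrK.
rewrite mulrBr mulrA mulVf // mul1r.
move: (2^-1 * B) (x ^+ m.+1) ((x + 1) ^+ m.+1) => a b c.
ring.
Qed.

Lemma sum_even_odd (f : nat -> rat) k :
  \sum_(0 <= i < (2 * k)%N) f i = \sum_(0 <= j < k) (f (2 * j)%N + f (2 * j).+1).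
Proof.
elim: k => [|k IH]; first by rewrite !big_geq.
rewrite [RHS]big_nat_recr //= -IH.
have -> : (2 * k.+1 = (2 * k).+2)%N by rewrite mulnS addnC addn2.
by rewrite !big_nat_recr //= addrA.
Qed.

Theorem lemma5p7 (n : nat) :
  \sum_(0 <= i < n.+1) - ebrace n i * (-2 : rat) ^- (2 * i)
  = (-2 : rat) ^- (2 * n + 1).
Proof.
set x : rat := (-2)^-1.
set N := (2 * n + 1)%N.
set P : {poly rat} := 'X^N - euler_poly N.
have sP : (size P <= 2 * n.+1)%N.
  apply: leq_trans (size_polyD _ _) _; rewrite geq_max size_polyXn size_polyN.
  have -> : (2 * n.+1 = N.+1)%N by rewrite /N mulnS addnC addn2 addn1.
  by rewrite ltnSn size_euler.
have Hx : - x = x + 1 by rewrite /x; field.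
have Ex : (-2 : rat)^-1 = x by [].
clearbody x.
have HP : P.[x] + P.[- x] = \sum_(0 <= j < n.+1) (P`_(2 * j) * (2 * x ^+ (2 * j))).
  rewrite !(horner_coef_wide _ sP) -big_split /= -(big_mkord xpredT (fun i => P`_i * x ^+ i + P`_i * (- x) ^+ i)).
  rewrite sum_even_odd; apply: eq_bigr => j _.
  have e1 : (-1 : rat) ^+ (2 * j) = 1 by rewrite exprM sqrrN expr1n.
  have e2 : (-1 : rat) ^+ (2 * j).+1 = -1 by rewrite (exprS (-1)) e1 mulr1.
  rewrite !(exprNn x) e1 e2; ring.
have HE := euler_shift N x.
have HN : (- x) ^+ N = - x ^+ N.
  have e1 : (-1 : rat) ^+ (2 * n) = 1 by rewrite exprM sqrrN expr1n.
  by rewrite (exprNn x) /N addn1 (exprS (-1)) e1 mulr1 mulN1r.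
have HP2 : P.[x] + P.[- x] = - (2 * x ^+ N).
  rewrite /P !hornerD !hornerN !hornerXn HN Hx -HE -Hx; ring.
have -> : \sum_(0 <= i < n.+1) - ebrace n i * (-2 : rat) ^- (2 * i)
  = - 2^-1 * (P.[x] + P.[- x]).
  rewrite HP mulr_sumr; apply: eq_bigr => i _.
  by rewrite -exprVn Ex /ebrace -/N -/P; field.
by rewrite HP2 -exprVn Ex; field.
Qed.
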